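(* Let $K$ be a finite field of order $q$ and $s$ a positive integer with $\gcd(s,q-1)=1$. For any positive integer $k$, any $b,t_1,\dots,t_k\in K^\times$ and any $a\in K$, $$Q^{(t_1,\dots,t_k)}_{a,b}=\frac{Q^{(a/b,t_1,\dots,t_k)}_{0,0}-Q^{(t_1,\dots,t_k)}_{0,0}}{q-1}.$$
   Context: Let $1/s$ denote the inverse of $s$ modulo $q-1$, so $x\mapsto x^{1/s}$ is the inverse permutation of $x\mapsto x^s$ on $K$. For $t=(t_1,\dots,t_k)\in K^k$ and $v=(v_1,\dots,v_k)\in K^k$ write $t\cdot v=t_1v_1+\cdots+t_kv_k$ and $\langle v\rangle=(v_1^s+\cdots+v_k^s)^{1/s}$. For $a,b\in K$, $Q^t_{a,b}$ denotes the number of $v\in K^k$ with $t\cdot v=a$ and $\langle v\rangle=b$. *)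

(* Defs.v *)
From mathcomp Require Import all_boot all_order all_algebra.
Set Implicit Arguments. Unset Strict Implicit. Unset Printing Implicit Defensive.
Import GRing.Theory.
Local Open Scope ring_scope.

(* The inverse of s modulo m, as a representative u with 1 <= u <= m
   (m = q - 1 >= 1 in our use).  Defaults to 1 if no inverse exists. *)
Definition inv_mod (s m : nat) : nat :=
  odflt 1%N (omap (@nat_of_ord m.+1)
    [pick u : 'I_m.+1 | (0 < u)%N && (s * u == 1 %[mod m])%N]).

Definition sroot (K : finFieldType) (s : nat) (x : K) : K :=
  x ^+ (inv_mod s #|K|.-1).

Definition sbracket (K : finFieldType) (s : nat) (n : nat) (v : {ffun 'I_n -> K}) : K :=
  sroot s (\sum_(i < n) v i ^+ s).

Definition dotv (K : finFieldType) (t : seq K) (v : {ffun 'I_(size t) -> K}) : K :=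
  \sum_(i < size t) t`_i * v i.

Definition Qcount (K : finFieldType) (s : nat) (t : seq K) (a b : K) : nat :=
  #|[set v : {ffun 'I_(size t) -> K} | (dotv v == a) && (sbracket s v == b)]|.

(* Main.v *)
Require Import Defs.
From mathcomp Require Import all_boot all_order all_algebra all_field.
From mathcomp Require Import ring.
Import GRing.Theory.
Local Open Scope ring_scope.
Set Implicit Arguments. Unset Strict Implicit.

Lemma inv_mod_spec (s m : nat) : (0 < m)%N -> (0 < s)%N -> coprime s m ->
  (0 < inv_mod s m)%N /\ (s * inv_mod s m == 1 %[mod m])%N.
Proof.
move=> m0 s0 cop; rewrite /inv_mod.
case: pickP => [u /andP[u0 hu] | none] /=; first by [].
exfalso.
case: (egcdnP m s0) => km kn E _.
move: cop; rewrite /coprime => /eqP g1; rewrite g1 in E.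
have key : (s * km == 1 %[mod m])%N.
  by rewrite mulnC E -modnDml modnMl.
pose u := if (km %% m == 0)%N then m else (km %% m)%N.
have ult : (u < m.+1)%N.
  rewrite /u; case: ifP => // _; by rewrite ltnS ltnW // ltn_mod.
have := none (Ordinal ult); rewrite /= /u.
case: ifP => [/eqP h|h].
  rewrite m0 /=; move: key; rewrite -modnMmr h muln0 mod0n => key.
  by rewrite -modnMmr modnn muln0 mod0n key.
by rewrite lt0n h /= -modnMmr modn_mod modnMmr key.
Qed.

Lemma card_gt1 (K : finFieldType) : (0 < #|K|.-1)%N.
Proof.
rewrite -(cardsC1 (0:K)) card_gt0; apply/set0Pn; exists 1; rewrite !inE; exact: oner_neq0.
Qed.

Lemma expsu (K : finFieldType) (s : nat) : (0 < s)%N -> coprime s #|K|.-1 ->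
  forall x : K, x ^+ (s * inv_mod s #|K|.-1) = x.
Proof.
move=> s0 cop x.
have m0 := card_gt1 K.
have [u0 hu] := @inv_mod_spec s _ m0 s0 cop.
set m := #|K|.-1 in m0 u0 hu *; set u := inv_mod s m in u0 hu *.
have su1 : (1 <= s * u)%N by rewrite muln_gt0 s0.
move: hu; rewrite eqn_mod_dvd // => /dvdnP[j hj].
have -> : (s * u = 1 + j * m)%N by rewrite -hj subnKC.
have q : #|K| = m.+1 by rewrite /m prednK //; apply/card_gt0P; by exists x.
clear hj; elim: j => [|j IH]; first by rewrite mul0n addn0 expr1.
by rewrite mulSn addnCA exprD IH -exprSr -q expf_card.
Qed.

Lemma sroot_eq (K : finFieldType) (s : nat) : (0 < s)%N -> coprime s #|K|.-1 ->
  forall y z : K, (sroot s y == z) = (y == z ^+ s).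
Proof.
move=> s0 cop y z; rewrite /sroot; apply/eqP/eqP => [<-|->].
  by rewrite -exprM mulnC expsu.
by rewrite -exprM expsu.
Qed.

Lemma sign_s (K : finFieldType) (s : nat) : (0 < s)%N -> coprime s #|K|.-1 ->
  (-1 : K) ^+ s = -1.
Proof.
move=> s0 cop; rewrite -signr_odd; case ev: (odd s); first by rewrite expr1. rewrite expr0.
have := @expsu K s s0 cop (-1); rewrite exprM -signr_odd ev expr0 expr1n => h.
by rewrite -h.
Qed.

Definition fcons (K : finFieldType) n (x : K) (w : {ffun 'I_n -> K}) : {ffun 'I_n.+1 -> K} :=
  [ffun i => oapp w x (unlift ord0 i)].

Lemma fcons0 (K : finFieldType) n (x : K) (w : {ffun 'I_n -> K}) : fcons x w ord0 = x.
Proof. by rewrite ffunE unlift_none. Qed.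

Lemma fconsS (K : finFieldType) n (x : K) (w : {ffun 'I_n -> K}) i : fcons x w (lift ord0 i) = w i.
Proof. by rewrite ffunE liftK. Qed.

Lemma fcons_eta (K : finFieldType) n (v : {ffun 'I_n.+1 -> K}) :
  v = fcons (v ord0) [ffun j => v (lift ord0 j)].
Proof.
apply/ffunP => i; rewrite ffunE; case: unliftP => [j ->|->] /=; by rewrite ?ffunE.
Qed.

Lemma fcons_inj (K : finFieldType) n : injective (fun p : K * {ffun 'I_n -> K} => fcons p.1 p.2).
Proof.
move=> [x w] [y z] /= h.
have hx : x = y by rewrite -(fcons0 x w) h fcons0.
congr pair => //; apply/ffunP => i; by rewrite -(fconsS x w) h fconsS.
Qed.

Lemma dot_fcons (K : finFieldType) (c : K) t x (w : {ffun 'I_(size t) -> K}) :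
  @dotv K (c :: t) (fcons x w) = c * x + dotv w.
Proof.
rewrite /dotv big_ord_recl /= fcons0; congr (_ + _); apply: eq_bigr => i _.
by rewrite fconsS add0n.
Qed.

Lemma sum_fcons (K : finFieldType) n s (x : K) (w : {ffun 'I_n -> K}) :
  \sum_(i < n.+1) fcons x w i ^+ s = x ^+ s + \sum_(i < n) w i ^+ s.
Proof.
rewrite big_ord_recl fcons0; congr (_ + _); apply: eq_bigr => i _; by rewrite fconsS.
Qed.

Lemma dot_scale (K : finFieldType) (t : seq K) (l : K) (w : {ffun 'I_(size t) -> K}) :
  @dotv K t [ffun i => l * w i] = l * dotv w.
Proof. rewrite /dotv mulr_sumr; apply: eq_bigr => i _; by rewrite ffunE mulrCA. Qed.

Lemma sum_scale (K : finFieldType) n s (l : K) (w : {ffun 'I_n -> K}) :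
  \sum_(i < n) [ffun i => l * w i] i ^+ s = l ^+ s * \sum_(i < n) w i ^+ s.
Proof. rewrite mulr_sumr; apply: eq_bigr => i _; by rewrite ffunE exprMn. Qed.

Lemma count_main (K : finFieldType) (s : nat) (s0 : (0 < s)%N)
    (cop : coprime s #|K|.-1) (t : seq K) (a b : K) (b_nz : b != 0) :
  Qcount s (a / b :: t) 0%R 0%R = (Qcount s t 0%R 0%R + #|K|.-1 * Qcount s t a b)%N.
Proof.
set c := a / b.
have cb : c * b = a by rewrite /c divfK.
have sg := sign_s s0 cop.
have sr := sroot_eq s0 cop.
have z0 : (0:K) ^+ s = 0 by rewrite expr0n gtn_eqF.
set n := size t.
pose P := [set p : K * {ffun 'I_n -> K} |
   (c * p.1 + dotv p.2 == 0) && (p.1 ^+ s + \sum_(i < n) p.2 i ^+ s == 0)].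
have -> : Qcount s (c :: t) 0%R 0%R = #|P|.
  rewrite /Qcount -(card_imset _ (@fcons_inj K n)); apply: eq_card => v.

  rewrite inE; apply/idP/imsetP.
    rewrite {1 2}(fcons_eta v) dot_fcons /sbracket sum_fcons sr expr0n /= eqn0Ngt s0 /=.
    move=> hv; exists (v ord0, [ffun j => v (lift ord0 j)]) => /=; last exact: fcons_eta.
    by rewrite inE.
  move=> [[x w] hp ->] /=; move: hp; rewrite inE /=.
  by rewrite dot_fcons /sbracket sum_fcons sr expr0n /= eqn0Ngt s0 /=.
rewrite -(cardsID [set p | p.1 == 0] P); congr addn.
  have inj0 : injective (fun w : {ffun 'I_n -> K} => (0 : K, w)) by move=> ? ? [].
  rewrite /Qcount -(card_imset _ inj0); apply: eq_card => -[x w].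
  rewrite !inE /=; apply/idP/imsetP.
    move=> /andP[/andP[h1 h2] /eqP x0]; subst x; exists w => //.
    rewrite mulr0 add0r in h1; rewrite z0 add0r in h2.
    by rewrite inE /sbracket sr z0; apply/andP.
  move=> [w' hw [-> ->]]; rewrite inE /sbracket sr z0 in hw.
  by rewrite mulr0 add0r z0 add0r eqxx andbT.
pose g := fun p : K * {ffun 'I_n -> K} => (- (p.1 * b), [ffun i => p.1 * p.2 i]).
have ginj : {in setX [set~ (0:K)] [set v : {ffun 'I_n -> K} | (dotv v == a) && (sbracket s v == b)] &, injective g}.
  move=> [l w] [l' w']; rewrite !inE /= => /andP[l0 _] _ [] /oppr_inj/(mulIf b_nz) ll' /ffunP hw.
  subst l'; congr pair; apply/ffunP => i; move: (hw i); rewrite !ffunE; exact: (mulfI l0).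
rewrite /Qcount -(cardsC1 (0:K)) -cardsX -(card_in_imset ginj); apply: eq_card => -[x v].
rewrite !inE /=; apply/idP/imsetP.
  move=> /andP[x0 /andP[/eqP h1 /eqP h2]].
  have l0 : - x / b != 0 by rewrite mulf_neq0 ?invr_eq0 ?oppr_eq0.
  exists (- x / b, [ffun i => (- x / b)^-1 * v i]).
    rewrite !inE /= l0 /= dot_scale /sbracket sr sum_scale.
    have -> : dotv v = - (c * x) by rewrite -[dotv v](addKr (c * x)) h1 addr0.
    have -> : \sum_(i < n) v i ^+ s = - x ^+ s by rewrite -[\sum_(i < n) v i ^+ s](addKr (x ^+ s)) h2 addr0.
    apply/andP; split; apply/eqP.
      rewrite -cb; field; by rewrite b_nz oppr_eq0 x0.
    have -> : (- x / b)^-1 ^+ s = - (b ^+ s / x ^+ s).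
      by rewrite exprVn mulNr -mulN1r exprMn sg mulN1r expr_div_n invrN invf_div.
    have xs : x ^+ s != 0 by rewrite expf_neq0.
    have bs : b ^+ s != 0 by rewrite expf_neq0.
    by rewrite mulrN mulNr opprK divfK.
  rewrite /g /=; congr pair.
    by rewrite divfK // opprK.
  by apply/ffunP => i; rewrite !ffunE mulrA mulfV // mul1r.
move=> [[l w]]; rewrite !inE /= => /andP[l0 /andP[/eqP h1 h2]] [-> ->].
rewrite /sbracket sr in h2; move/eqP: h2 => h2.
rewrite oppr_eq0 mulf_neq0 //= dot_scale sum_scale h1 h2.
have -> : (- (l * b)) ^+ s = - (l ^+ s * b ^+ s) by rewrite -mulN1r !exprMn sg mulN1r.
apply/andP; split; apply/eqP.
  by rewrite -cb; ring.
by ring.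
Qed.

Unset Implicit Arguments.

Theorem lemma4p6 (K : finFieldType) (s : nat) (s_pos : (0 < s)%N)
    (s_coprime : coprime s #|K|.-1)
    (t : seq K) (k_pos : (0 < size t)%N) (t_nz : all (fun x => x != 0) t)
    (a b : K) (b_nz : b != 0) :
  (Qcount s t a b)%:R =
    ((Qcount s (a / b :: t) 0 0)%:R - (Qcount s t 0 0)%:R) / (#|K|.-1)%:R
    :> rat.
Proof.
rewrite (@count_main K s s_pos s_coprime t a b b_nz) natrD natrM addrAC subrr add0r.
have m0 : (#|K|.-1)%:R != 0 :> rat by rewrite Num.Theory.pnatr_eq0 -lt0n card_gt1.
by rewrite mulrC mulKf.
Qed.
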